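(* Let $k$ be a field, $Q,q\in k^\times$, $d\ge1$. If $m,n\geq 2d$ are odd, then the algebras $S^B_{Q,q}(m;d)=\mathrm{End}_{\mathcal H^B_{Q,q}(d)}(V_m^{\otimes d})$ and $S^B_{Q,q}(n;d)=\mathrm{End}_{\mathcal H^B_{Q,q}(d)}(V_n^{\otimes d})$ are Morita equivalent.
   Context: $\mathcal H^B_{Q,q}(d)$ is the algebra generated by $T_0,\dots,T_{d-1}$ with relations $(T_0+Q)(T_0-Q^{-1})=0$; $(T_i+q)(T_i-q^{-1})=0$ ($i>0$); $T_iT_{i+1}T_i=T_{i+1}T_iT_{i+1}$ ($i>0$); $T_0T_1T_0T_1=T_1T_0T_1T_0$; $T_iT_j=T_jT_i$ ($|i-j|>1$). For $N=2s$ let $\mathbb I_N=\{-\tfrac{2s-1}{2},\dots,-\tfrac12,\tfrac12,\dots,\tfrac{2s-1}{2}\}$ and for $N=2s+1$ let $\mathbb I_N=\{-s,\dots,s\}$; $V_N$ has basis $\{v_i:i\in\mathbb I_N\}$. $R_q(v_i\otimes v_j)=q^{-1}v_i\otimes v_j$ if $i=j$, $v_j\otimes v_i$ if $i<j$, $v_j\otimes v_i+(q^{-1}-q)v_i\otimes v_j$ if $i>j$; $K_Q(v_i)=Q^{-1}v_i$ if $i=0$, $v_{-i}$ if $i>0$, $v_{-i}+(Q^{-1}-Q)v_i$ if $i<0$. The algebra acts on $V_N^{\otimes d}$ from the right: $T_i$ ($i>0$) by $R_q$ on factors $i,i+1$, $T_0$ by $K_Q$ on the first factor. *)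

(* Defs.v *)
From mathcomp Require Import all_boot all_order all_algebra.
Set Implicit Arguments.
Unset Strict Implicit.
Unset Printing Implicit Defensive.
Import Order.TTheory GRing.Theory Num.Theory.
Local Open Scope ring_scope.

Section SchurB.
Variable k : fieldType.

(* Basis of V_N^{(x) d}: d-tuples of indices.  The index set I_N is encoded
   by 'I_N via a |-> (2a - (N-1))/2, an order-preserving bijection; the
   index -a corresponds to N-1-a and the index 0 (N odd) to 2a = N-1. *)
Definition tens (N d : nat) := {ffun 'I_d -> 'I_N}.
Definition tdim (N d : nat) := #|{ffun 'I_d -> 'I_N}|.

(* coefficient of v_b in K_Q(v_a) *)
Definition coefK (Q : k) (N : nat) (a b : 'I_N) : k :=
  if (2 * a == N.-1)%N then (b == a)%:R * Q^-1
  else if (N.-1 < 2 * a)%N then (val b == N.-1 - a)%N%:R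
  else (val b == N.-1 - a)%N%:R + (b == a)%:R * (Q^-1 - Q).

Definition prev_ord (d : nat) (i : 'I_d) : 'I_d :=
  Ordinal (leq_ltn_trans (leq_pred i) (ltn_ord i)).

(* coefficient of the basis tensor w' in (w . T_i)  (right action;
   i = 0: K_Q on the first factor; i > 0: R_q on factors i, i+1, 1-based) *)
Definition actT (Q q : k) (N d : nat) (i : 'I_d) (w w' : tens N d) : k :=
  if val i == 0%N then
    ([forall j, (j != i) ==> (w' j == w j)])%:R * coefK Q (w i) (w' i)
  else
    let p := prev_ord i in
    let sw : tens N d := [ffun j => if j == p then w i
                                   else if j == i then w p else w j] in
    let a := w p in let b := w i in
    if a == b then (w' == w)%:R * q^-1
    else if (val a < val b)%N then (w' == sw)%:R
    else (w' == sw)%:R + (w' == w)%:R * (q^-1 - q).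

(* matrix of the linear map v |-> v . T_i on column vectors *)
Definition Tmx (Q q : k) (N d : nat) (i : 'I_d) : 'M[k]_(tdim N d) :=
  \matrix_(r, c) actT Q q i (enum_val c) (enum_val r).

(* S^B_{Q,q}(N;d) = End_{H^B_{Q,q}(d)}(V_N^{(x) d}): matrices commuting with
   the action of all generators T_0, ..., T_{d-1}; the algebra structure is
   composition = matrix product. *)
Definition schurB (Q q : k) (N d : nat) : pred 'M[k]_(tdim N d) :=
  fun A => [forall i : 'I_d, A *m Tmx Q q N i == Tmx Q q N i *m A].

Section Modules.
Variables (n : nat) (A : pred 'M[k]_n).

Definition rmod_axiom (m : nat) (act : 'M[k]_n -> 'M[k]_m) : Prop :=
  [/\ act 1%:M = 1%:M,
      forall a b, a \in A -> b \in A -> act (a *m b) = act a *m act b,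
      forall a b, a \in A -> b \in A -> act (a + b) = act a + act b &
      forall (c : k) a, a \in A -> act (c *: a) = c *: act a].

(* a module: k^rdim (row vectors), with v . a = v *m ract a *)
Record rmod := RMod {
  rdim : nat;
  ract : 'M[k]_n -> 'M[k]_rdim;
  ractP : rmod_axiom ract }.

Definition is_hom (M N : rmod) (f : 'M[k]_(rdim M, rdim N)) : Prop :=
  forall a, a \in A -> ract M a *m f = f *m ract N a.

End Modules.

Record functor n1 n2 (A : pred 'M[k]_n1) (B : pred 'M[k]_n2) := Functor {
  Fo : rmod A -> rmod B;
  Fh : forall M N : rmod A,
         'M[k]_(rdim M, rdim N) -> 'M[k]_(rdim (Fo M), rdim (Fo N)) }.

Definition is_functor n1 n2 (A : pred 'M[k]_n1) (B : pred 'M[k]_n2)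
  (F : functor A B) : Prop :=
  [/\ forall M N f, @is_hom _ A M N f -> is_hom (Fh F f),
      forall M : rmod A, Fh F (1%:M : 'M_(rdim M)) = 1%:M,
      forall M N P f g, @is_hom _ A M N f -> @is_hom _ A N P g ->
         Fh F (f *m g) = Fh F f *m Fh F g &
      forall M N (c : k) f g, @is_hom _ A M N f -> @is_hom _ A M N g ->
         Fh F (c *: f + g) = c *: Fh F f + Fh F g].

Definition iso_id n1 n2 (A : pred 'M[k]_n1) (B : pred 'M[k]_n2)
  (F : functor A B) (G : functor B A) : Prop :=
  exists eta : forall M : rmod A, 'M[k]_(rdim (Fo G (Fo F M)), rdim M),
    (forall M, is_hom (eta M) /\
       exists g : 'M[k]_(rdim M, rdim (Fo G (Fo F M))),
         [/\ is_hom g, eta M *m g = 1%:M & g *m eta M = 1%:M]) /\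
    (forall M N f, @is_hom _ A M N f ->
       Fh G (Fh F f) *m eta N = eta M *m f).

Definition morita n1 n2 (A : pred 'M[k]_n1) (B : pred 'M[k]_n2) : Prop :=
  exists (F : functor A B) (G : functor B A),
    [/\ is_functor F, is_functor G, iso_id F G & iso_id G F].

End SchurB.
Arguments schurB {k} Q q N d _.
Arguments Tmx {k} Q q N d i.

(* Main.v *)
Require Import Defs.
From mathcomp Require Import all_boot all_order all_algebra.
From mathcomp Require Import zify.
Set Implicit Arguments.
Unset Strict Implicit.
Unset Printing Implicit Defensive.
Import Order.TTheory GRing.Theory Num.Theory.

Local Close Scope ring_scope.
Local Open Scope ring_scope.

Section Blocks.
Variable k : fieldType.
Variable r : nat.

Definition Lb (d : nat) (i : 'I_r) : 'M[k]_(d, r * d) :=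
  \matrix_(a, c) (c == mxvec_index i a)%:R.

Lemma mxvec_index_inj d (i j : 'I_r) (a b : 'I_d) :
  (mxvec_index i a == mxvec_index j b) = (i == j) && (a == b).
Proof.
apply/eqP/andP => [|[/eqP-> /eqP->] //].
move=> /(congr1 (@nat_of_ord _)) /= /val_inj /enum_rank_inj [-> ->]; done.
Qed.

Lemma LLt d (i j : 'I_r) : Lb d i *m (Lb d j)^T = (i == j)%:R *: 1%:M.
Proof.
apply/matrixP => a b; rewrite !mxE.
under eq_bigr => c _ do rewrite !mxE.
rewrite (bigD1 (mxvec_index i a)) //= big1; last first.
  by move=> c /negbTE nc; rewrite nc mul0r.
rewrite eqxx mul1r addr0 mxvec_index_inj eq_sym.
by rewrite -natrM mulnb.
Qed.

Lemma sumLtL d : \sum_i (Lb d i)^T *m Lb d i = 1%:M.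
Proof.
apply/matrixP => c c'; rewrite summxE.
under eq_bigr => i _ do (rewrite !mxE; under eq_bigr => a _ do rewrite !mxE).
case/mxvec_indexP: c => i a.
rewrite (bigD1 i) //= [X in _ + X]big1 => [|j nji]; last first.
  rewrite big1 // => b _; rewrite mxvec_index_inj.
  by rewrite eq_sym (negbTE nji) mul0r.
rewrite addr0 (bigD1 a) //= [X in _ + X]big1 => [|b nba]; last first.
  by rewrite mxvec_index_inj eqxx eq_sym (negbTE nba) mul0r.
rewrite eqxx mul1r !addr0 !mxE.
by case: eqP => [->|/eqP ne]; rewrite ?eqxx // eq_sym (negbTE ne).
Qed.

Lemma L_sumLt d p (F : 'I_r -> 'M[k]_(d, p)) j :
  Lb d j *m (\sum_i (Lb d i)^T *m F i) = F j.
Proof.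
rewrite mulmx_sumr (bigD1 j) //= big1 => [|i nij]; last first.
  by rewrite mulmxA LLt eq_sym (negbTE nij) scale0r mul0mx.
by rewrite mulmxA LLt eqxx scale1r mul1mx addr0.
Qed.

Lemma sumL_Lt d p (F : 'I_r -> 'M[k]_(p, d)) j :
  (\sum_i F i *m Lb d i) *m (Lb d j)^T = F j.
Proof.
rewrite mulmx_suml (bigD1 j) //= big1 => [|i nij]; last first.
  by rewrite -mulmxA LLt (negbTE nij) scale0r mulmx0.
by rewrite -mulmxA LLt eqxx scale1r mulmx1 addr0.
Qed.

End Blocks.

Section Split.
Variable k : fieldType.
Variable p : nat.
Variable E : 'M[k]_p.
Hypothesis EE : E *m E = E.
Definition Sp := row_base E.
Definition Tp := E *m pinvmx Sp.
Lemma TpSp : Tp *m Sp = E.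
Proof. by rewrite /Tp mulmxKpV // eq_row_base. Qed.
Lemma SpE : Sp *m E = Sp.
Proof.
have sS : (Sp <= E)%MS by rewrite eq_row_base.
by rewrite -{1}(mulmxKpV sS) -mulmxA EE mulmxKpV.
Qed.
Lemma SpTp : Sp *m Tp = 1%:M.
Proof.
apply: (row_free_inj (row_base_free E)) => /=.
by rewrite /Tp mulmxA SpE mulmxKpV // mul1mx.
Qed.
End Split.

Local Close Scope ring_scope.
Local Open Scope ring_scope.

Section Comm.
Variables (k : fieldType) (I : finType).
Definition intertw n1 n2 (T1 : I -> 'M[k]_n1) (T2 : I -> 'M[k]_n2)
  (x : 'M[k]_(n1, n2)) := forall i, x *m T2 i = T1 i *m x.
Definition comm n (T : I -> 'M[k]_n) : pred 'M[k]_n :=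
  fun a => [forall i, a *m T i == T i *m a].

Lemma commP n (T : I -> 'M[k]_n) a : reflect (intertw T T a) (a \in comm T).
Proof. by apply: (iffP forallP) => H i; apply/eqP/H. Qed.

Lemma intertwM n1 n2 n3 (T1 : I -> 'M[k]_n1) (T2 : I -> 'M[k]_n2)
  (T3 : I -> 'M[k]_n3) x y :
  intertw T1 T2 x -> intertw T2 T3 y -> intertw T1 T3 (x *m y).
Proof. by move=> Hx Hy i; rewrite -mulmxA Hy !mulmxA Hx. Qed.

Lemma intertwD n1 n2 (T1 : I -> 'M[k]_n1) (T2 : I -> 'M[k]_n2) x y :
  intertw T1 T2 x -> intertw T1 T2 y -> intertw T1 T2 (x + y).
Proof. by move=> Hx Hy i; rewrite mulmxDl mulmxDr Hx Hy. Qed.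

Lemma intertwZ n1 n2 (T1 : I -> 'M[k]_n1) (T2 : I -> 'M[k]_n2) c x :
  intertw T1 T2 x -> intertw T1 T2 (c *: x).
Proof. by move=> Hx i; rewrite -scalemxAl Hx scalemxAr. Qed.

Lemma intertw0 n1 n2 (T1 : I -> 'M[k]_n1) (T2 : I -> 'M[k]_n2) :
  intertw T1 T2 0.
Proof. by move=> i; rewrite mul0mx mulmx0. Qed.

Lemma intertw1 n (T : I -> 'M[k]_n) : intertw T T 1%:M.
Proof. by move=> i; rewrite mul1mx mulmx1. Qed.

Lemma intertw_sum n1 n2 (T1 : I -> 'M[k]_n1) (T2 : I -> 'M[k]_n2)
   (J : Type) (s : seq J) (P : pred J) (F : J -> 'M_(n1, n2)) :
  (forall j, P j -> intertw T1 T2 (F j)) ->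
  intertw T1 T2 (\sum_(j <- s | P j) F j).
Proof.
move=> H; apply: (big_ind (intertw T1 T2)) => //.
  exact: intertw0.
by move=> *; apply: intertwD.
Qed.
End Comm.

Section Fun.
Variables (k : fieldType) (I : finType) (n1 n2 : nat).
Variables (T1 : I -> 'M[k]_n1) (T2 : I -> 'M[k]_n2).
Variables (r : nat) (x : 'I_r -> 'M[k]_(n1, n2)) (y : 'I_r -> 'M[k]_(n2, n1)).
Hypotheses (xI : forall j, intertw T1 T2 (x j)) (yI : forall j, intertw T2 T1 (y j)).
Hypothesis yx1 : \sum_j y j *m x j = 1%:M.

Local Notation A := (comm T1).
Local Notation B := (comm T2).

Lemma memA b i j : b \in B -> x i *m b *m y j \in A.
Proof.
move/commP=> Hb; apply/commP.
by apply: intertwM (yI j); apply: intertwM Hb.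
Qed.

Section Mod.
Variable M : rmod A.
Local Notation d := (rdim M).
Local Notation act := (ract M).

Lemma A0 : (0 : 'M_n1) \in A.
Proof. by apply/commP; apply: intertw0. Qed.
Lemma A1 : (1%:M : 'M_n1) \in A.
Proof. by apply/commP; apply: intertw1. Qed.
Lemma AD a b : a \in A -> b \in A -> a + b \in A.
Proof. by move=> /commP ? /commP ?; apply/commP; apply: intertwD. Qed.
Lemma AM a b : a \in A -> b \in A -> a *m b \in A.
Proof. by move=> /commP ? /commP ?; apply/commP; apply: intertwM. Qed.

Lemma act1 : act 1%:M = 1%:M. Proof. by case: (ractP M). Qed.
Lemma actM a b : a \in A -> b \in A -> act (a *m b) = act a *m act b.
Proof. by case: (ractP M) => _ H _ _; apply: H. Qed.
Lemma actD a b : a \in A -> b \in A -> act (a + b) = act a + act b.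
Proof. by case: (ractP M) => _ _ H _; apply: H. Qed.
Lemma actZ c a : a \in A -> act (c *: a) = c *: act a.
Proof. by case: (ractP M) => _ _ _ H; apply: H. Qed.
Lemma act0 : act 0 = 0.
Proof.
by rewrite -(scale0r (1%:M : 'M_n1)) actZ ?scale0r //; apply: A1.
Qed.
Lemma act_sum (J : Type) (s : seq J) (P : pred J) (F : J -> 'M_n1) :
  (forall j, P j -> F j \in A) ->
  act (\sum_(j <- s | P j) F j) = \sum_(j <- s | P j) act (F j).
Proof.
move=> H.
suff: (\sum_(j <- s | P j) F j) \in A /\
    act (\sum_(j <- s | P j) F j) = \sum_(j <- s | P j) act (F j) by case.
apply: (big_ind2 (fun a b => a \in A /\ act a = b)).
- by split; [apply: A0 | apply: act0].
- by move=> a1 b1 a2 b2 [? <-] [? <-]; split; [apply: AD|apply: actD].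
- by move=> j Pj; split => //; apply: H.
Qed.

Definition Phi (b : 'M_n2) : 'M[k]_(r * d) :=
  \sum_i (Lb k d i)^T *m (\sum_j act (x i *m b *m y j) *m Lb k d j).

Lemma L_Phi b j : Lb k d j *m Phi b = \sum_j' act (x j *m b *m y j') *m Lb k d j'.
Proof. by rewrite L_sumLt. Qed.

Lemma Phi_Lt b i :
  Phi b *m (Lb k d i)^T = \sum_i' (Lb k d i')^T *m act (x i' *m b *m y i).
Proof. by rewrite /Phi mulmx_suml; apply: eq_bigr => i' _; rewrite -mulmxA sumL_Lt. Qed.

Lemma PhiM b b' : b \in B -> b' \in B -> Phi b *m Phi b' = Phi (b *m b').
Proof.
move=> Bb Bb'; rewrite {1}/Phi mulmx_suml; apply: eq_bigr => i _.
rewrite -mulmxA; congr (_ *m _).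
rewrite mulmx_suml.
under eq_bigr => j _ do rewrite -mulmxA L_Phi mulmx_sumr.
rewrite exchange_big /=; apply: eq_bigr => j' _.
under eq_bigr => j _ do rewrite mulmxA. rewrite -mulmx_suml; congr (_ *m _).
under eq_bigr => j _ do rewrite -actM ?memA //.
rewrite -act_sum; last by move=> j _; apply: AM; apply: memA.
congr (act _).
have E j : x i *m b *m y j *m (x j *m b' *m y j') =
  x i *m b *m (y j *m x j) *m (b' *m y j') by rewrite !mulmxA.
under eq_bigr => j _ do rewrite E.
by rewrite -mulmx_suml -mulmx_sumr yx1 mulmx1 !mulmxA.
Qed.

Lemma PhiD c b b' : b \in B -> b' \in B -> Phi (c *: b + b') = c *: Phi b + Phi b'.
Proof.
move=> Bb Bb'; rewrite /Phi scaler_sumr -big_split; apply: eq_bigr => i _ /=.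
rewrite scalemxAr -mulmxDr scaler_sumr -big_split; congr (_ *m _).
apply: eq_bigr => j _ /=.
have Hc : x i *m (c *: b) *m y j = c *: (x i *m b *m y j).
  by rewrite -scalemxAr -scalemxAl.
rewrite mulmxDr mulmxDl Hc actD; last 2 first.
- by apply/commP/intertwZ/commP/memA.
- exact: memA.
by rewrite actZ ?memA // scalemxAl mulmxDl.
Qed.

Lemma Phi0 : Phi 0 = 0.
Proof.
rewrite /Phi big1 // => i _; rewrite big1 ?mulmx0 // => j _.
by rewrite mul0mx act0 mul0mx.
Qed.

Definition EM := Phi 1%:M.

Lemma B1 : (1%:M : 'M_n2) \in B.
Proof. by apply/commP; apply: intertw1. Qed.

Lemma EME : EM *m EM = EM.
Proof. by rewrite /EM PhiM ?mulmx1 //; apply: B1. Qed.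

Lemma EPhi b : b \in B -> EM *m Phi b = Phi b.
Proof. by move=> Bb; rewrite /EM PhiM ?mul1mx //; apply: B1. Qed.
Lemma PhiE b : b \in B -> Phi b *m EM = Phi b.
Proof. by move=> Bb; rewrite /EM PhiM ?mulmx1 //; apply: B1. Qed.

Definition SM := Sp EM.
Definition TM := Tp EM.
Definition rho := \rank EM.

Lemma TS : TM *m SM = EM. Proof. exact: TpSp. Qed.
Lemma ST : SM *m TM = 1%:M. Proof. exact: SpTp EME. Qed.
Lemma SE : SM *m EM = SM. Proof. exact: SpE EME. Qed.
Lemma ET : EM *m TM = TM. Proof. by rewrite /TM /Tp mulmxA EME. Qed.

Definition actF (b : 'M_n2) : 'M[k]_rho := SM *m Phi b *m TM.

Lemma actF_axiom : rmod_axiom B actF.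
Proof.
split.
- by rewrite /actF -/EM SE ST.
- move=> b b' Bb Bb'; rewrite /actF -PhiM //.
  have -> : SM *m Phi b *m TM *m (SM *m Phi b' *m TM) =
     SM *m (Phi b *m (TM *m SM)) *m Phi b' *m TM by rewrite !mulmxA.
  by rewrite TS PhiE // !mulmxA.
- move=> b b' Bb Bb'; rewrite /actF.
  by have := PhiD 1 Bb Bb'; rewrite scale1r => ->; rewrite scale1r mulmxDr mulmxDl.
- move=> c b Bb; rewrite /actF.
  have B0 : (0 : 'M_n2) \in B by apply/commP; apply: intertw0.
  have := PhiD c Bb B0; rewrite addr0 => ->.
  by rewrite Phi0 addr0 -scalemxAr -scalemxAl.
Qed.

Definition FoM := RMod actF_axiom.

End Mod.
Definition Dm (M N : rmod A) (f : 'M_(rdim M, rdim N)) : 'M[k]_(r * rdim M, r * rdim N) :=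
  \sum_i (Lb k (rdim M) i)^T *m f *m Lb k (rdim N) i.

Lemma L_Dm (M N : rmod A) (f : 'M_(rdim M, rdim N)) j :
  Lb k (rdim M) j *m Dm f = f *m Lb k (rdim N) j.
Proof.
by rewrite /Dm; under eq_bigr do rewrite -mulmxA; rewrite L_sumLt.
Qed.

Lemma Dm_Lt (M N : rmod A) (f : 'M_(rdim M, rdim N)) j :
  Dm f *m (Lb k (rdim N) j)^T = (Lb k (rdim M) j)^T *m f.
Proof. by rewrite /Dm sumL_Lt. Qed.

Lemma Dm_Phi (M N : rmod A) (f : 'M_(rdim M, rdim N)) b :
  is_hom f -> b \in B -> Phi M b *m Dm f = Dm f *m Phi N b.
Proof.
move=> Hf Bb; rewrite /Phi mulmx_suml mulmx_sumr; apply: eq_bigr => i _.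
rewrite -[LHS]mulmxA [RHS]mulmxA Dm_Lt -mulmxA; congr (_ *m _).
rewrite mulmx_suml mulmx_sumr; apply: eq_bigr => j _.
by rewrite -mulmxA L_Dm !mulmxA Hf // memA.
Qed.

Lemma Dm1 (M : rmod A) : Dm (1%:M : 'M_(rdim M)) = 1%:M.
Proof. by rewrite /Dm -(sumLtL k r (rdim M)); apply: eq_bigr => i _; rewrite mulmx1. Qed.

Lemma DmM (M N P : rmod A) (f : 'M_(rdim M, rdim N)) (g : 'M_(rdim N, rdim P)) :
  Dm f *m Dm g = Dm (f *m g).
Proof.
rewrite {1}/Dm mulmx_suml; apply: eq_bigr => i _.
by rewrite -mulmxA L_Dm !mulmxA.
Qed.

Lemma DmD (M N : rmod A) c (f g : 'M_(rdim M, rdim N)) :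
  Dm (c *: f + g) = c *: Dm f + Dm g.
Proof.
rewrite /Dm scaler_sumr -big_split; apply: eq_bigr => i _ /=.
by rewrite mulmxDr mulmxDl -scalemxAr -scalemxAl.
Qed.

Definition Fh (M N : rmod A) (f : 'M_(rdim M, rdim N)) :
  'M_(rdim (FoM M), rdim (FoM N)) := SM M *m Dm f *m TM N.

Definition Fun := @Functor k n1 n2 A B FoM Fh.

Lemma Fun_functor : is_functor Fun.
Proof.
split.
- move=> M N f Hf b Bb /=; rewrite /actF /Fh.
  have -> : SM M *m Dm f *m TM N *m (SM N *m Phi N b *m TM N) =
     SM M *m Dm f *m ((TM N *m SM N) *m Phi N b) *m TM N by rewrite !mulmxA.
  have -> : SM M *m Phi M b *m TM M *m (SM M *m Dm f *m TM N) =
     SM M *m (Phi M b *m (TM M *m SM M)) *m Dm f *m TM N by rewrite !mulmxA.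
  rewrite !TS PhiE // EPhi // -(mulmxA (SM M)) Dm_Phi //.
  by rewrite !mulmxA.
- by move=> M /=; rewrite /Fh Dm1 mulmx1 ST.
- move=> M N P f g Hf Hg /=; rewrite /Fh.
  have -> : SM M *m Dm f *m TM N *m (SM N *m Dm g *m TM P) =
     SM M *m (Dm f *m (TM N *m SM N)) *m Dm g *m TM P by rewrite !mulmxA.
  rewrite TS /EM -Dm_Phi ?B1 // -/(EM M) mulmxA SE.
  by rewrite -[in RHS](mulmxA (SM M)) DmM.
- move=> M N c f g Hf Hg /=; rewrite /Fh DmD.
  by rewrite mulmxDr mulmxDl -scalemxAr -scalemxAl.
Qed.

End Fun.

Local Close Scope ring_scope.
Local Open Scope ring_scope.

Section Iso.
Variables (k : fieldType) (I : finType) (n1 n2 : nat).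
Variables (T1 : I -> 'M[k]_n1) (T2 : I -> 'M[k]_n2).
Variables (r : nat) (x : 'I_r -> 'M[k]_(n1, n2)) (y : 'I_r -> 'M[k]_(n2, n1)).
Hypotheses (xI : forall j, intertw T1 T2 (x j)) (yI : forall j, intertw T2 T1 (y j)).
Hypothesis yx1 : \sum_j y j *m x j = 1%:M.
Variables (s : nat) (u : 'I_s -> 'M[k]_(n2, n1)) (v : 'I_s -> 'M[k]_(n1, n2)).
Hypotheses (uI : forall j, intertw T2 T1 (u j)) (vI : forall j, intertw T1 T2 (v j)).
Hypothesis vu1 : \sum_j v j *m u j = 1%:M.

Local Notation A := (comm T1).
Local Notation B := (comm T2).

Lemma AS (J : Type) (t : seq J) (P : pred J) (F : J -> 'M_n1) :
  (forall j, P j -> F j \in A) -> \sum_(j <- t | P j) F j \in A.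
Proof. by move=> H; apply/commP; apply: intertw_sum => j /H /commP. Qed.

Ltac mem := apply/commP; repeat first
  [ eapply intertwM | apply: xI | apply: yI | apply: uI | apply: vI
  | apply/commP; eassumption | apply: intertw1 ].

Section M.
Variable M : rmod A.
Local Notation d := (rdim M).
Local Notation act := (ract M).
Local Notation FM := (FoM xI yI yx1 M).
Local Notation rho := (rdim FM).
Local Notation S := (SM x y M).
Local Notation T := (TM x y M).
Local Notation L := (Lb k d).
Local Notation L' := (Lb k rho).

Definition Xi : 'M[k]_(s * rho, d) :=
  \sum_j \sum_i (L' j)^T *m S *m (L i)^T *m act (x i *m u j).
Definition Yi : 'M[k]_(d, s * rho) :=
  \sum_j \sum_i act (v j *m y i) *m L i *m T *m L' j.

Lemma L'_Xi j : L' j *m Xi = \sum_i S *m (L i)^T *m act (x i *m u j).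
Proof.
rewrite /Xi.
have -> : \sum_j \sum_i (L' j)^T *m S *m (L i)^T *m act (x i *m u j) =
  \sum_j (L' j)^T *m (\sum_i S *m (L i)^T *m act (x i *m u j)).
  by apply: eq_bigr => j' _; rewrite mulmx_sumr; apply: eq_bigr => i _; rewrite !mulmxA.
by rewrite L_sumLt.
Qed.

Lemma Yi_L'T j : Yi *m (L' j)^T = \sum_i act (v j *m y i) *m L i *m T.
Proof.
rewrite /Yi.
have -> : \sum_j \sum_i act (v j *m y i) *m L i *m T *m L' j =
  \sum_j (\sum_i act (v j *m y i) *m L i *m T) *m L' j.
  by apply: eq_bigr => j' _; rewrite mulmx_suml.
by rewrite sumL_Lt.
Qed.

Lemma LTSL i i' : L i *m T *m S *m (L i')^T = act (x i *m y i').
Proof.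
by rewrite -[L i *m T *m S]mulmxA (TS x y M) -mulmxA /EM Phi_Lt L_sumLt mulmx1.
Qed.

Lemma K4 : Yi *m Xi = 1%:M.
Proof.
transitivity (\sum_j act (v j *m u j)); last first.
  by rewrite -act_sum ?vu1 ?act1 // => j _; mem.
rewrite /Yi mulmx_suml; apply: eq_bigr => j _.
rewrite -mulmx_suml -mulmxA L'_Xi mulmx_suml.
transitivity (\sum_i \sum_i' act (v j *m (y i *m x i) *m (y i' *m x i') *m u j)); last first.
  rewrite (eq_bigr (fun i => act (\sum_i' v j *m (y i *m x i) *m (y i' *m x i') *m u j)));
    last by move=> i _; rewrite act_sum // => *; mem.
  rewrite -act_sum; last by move=> *; apply: AS => *; mem.
  congr (act _).
  under eq_bigr => i _ do rewrite -mulmx_suml -mulmx_sumr yx1 mulmx1.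
  by rewrite -mulmx_suml -mulmx_sumr yx1 mulmx1.
apply: eq_bigr => i _; rewrite mulmx_sumr; apply: eq_bigr => i' _.
have -> : act (v j *m y i) *m L i *m T *m (S *m (L i')^T *m act (x i' *m u j)) =
  act (v j *m y i) *m (L i *m T *m S *m (L i')^T) *m act (x i' *m u j) by rewrite !mulmxA.
rewrite LTSL -!actM; try by mem.
by rewrite !mulmxA.
Qed.

Definition Xj j : 'M[k]_(r * d, d) := \sum_i (L i)^T *m act (x i *m u j).
Definition Yl l : 'M[k]_(d, r * d) := \sum_i act (v l *m y i) *m L i.

Lemma XiE : Xi = \sum_j (L' j)^T *m (S *m Xj j).
Proof.
apply: eq_bigr => j _; rewrite /Xj !mulmx_sumr; apply: eq_bigr => i _.
by rewrite !mulmxA.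
Qed.

Lemma YiE : Yi = \sum_l (Yl l *m T) *m L' l.
Proof.
apply: eq_bigr => l _; rewrite /Yl !mulmx_suml; apply: eq_bigr => i _.
by rewrite !mulmxA.
Qed.

Lemma PhiXY j l : Phi x y M (u j *m v l) = Xj j *m Yl l.
Proof.
rewrite /Phi /Xj /Yl mulmx_suml; apply: eq_bigr => i _.
rewrite -[RHS]mulmxA; congr (_ *m _); rewrite mulmx_sumr; apply: eq_bigr => i' _.
rewrite [RHS]mulmxA -actM; try by mem. by rewrite !mulmxA.
Qed.

Lemma K3 : Xi *m Yi = Phi u v FM 1%:M.
Proof.
rewrite XiE YiE /Phi mulmx_suml; apply: eq_bigr => j _.
rewrite -mulmxA; congr (_ *m _); rewrite mulmx_sumr; apply: eq_bigr => l _.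
rewrite mulmxA; congr (_ *m _) => /=; rewrite /actF mulmx1 PhiXY.
by rewrite !mulmxA.
Qed.

Lemma PhiXj b l : b \in B -> Phi x y M b *m Xj l =
  \sum_i' (L i')^T *m \sum_i act (x i' *m b *m y i *m x i *m u l).
Proof.
move=> Bb; rewrite /Xj mulmx_sumr.
under eq_bigr => i _ do rewrite mulmxA Phi_Lt mulmx_suml.
rewrite exchange_big /=; apply: eq_bigr => i' _.
rewrite mulmx_sumr; apply: eq_bigr => i _.
rewrite -mulmxA -actM; last 2 first.
- by apply: (memA xI yI).
- by mem.
by rewrite !mulmxA.
Qed.

Lemma sumPhiXj j a : a \in A ->
  \sum_l Phi x y M (u j *m a *m v l) *m Xj l = Xj j *m act a.
Proof.
move=> Aa.
have Bb l : u j *m a *m v l \in B.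
  apply/commP; apply: intertwM (vI l); apply: intertwM (uI j) _; exact/commP.
under eq_bigr => l _ do rewrite PhiXj //.
rewrite exchange_big /Xj mulmx_suml; apply: eq_bigr => i' _ /=.
rewrite -mulmx_sumr -mulmxA -actM; [|by mem|done]; congr (_ *m _).
rewrite (eq_bigr (fun l => act (\sum_i x i' *m (u j *m a *m v l) *m y i *m x i *m u l)));
  last by move=> l _; rewrite act_sum // => *; mem.
rewrite -act_sum; last by move=> *; apply: AS => *; mem.
congr (act _).
have E l i : x i' *m (u j *m a *m v l) *m y i *m x i *m u l =
  x i' *m u j *m a *m v l *m (y i *m x i) *m u l by rewrite !mulmxA.
under eq_bigr => l _ do (under eq_bigr => i _ do rewrite E).
under eq_bigr => l _ do rewrite -mulmx_suml -mulmx_sumr yx1 mulmx1 -mulmxA.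
by rewrite -mulmx_sumr vu1 mulmx1.
Qed.

Lemma L'_Xi' j : L' j *m Xi = S *m Xj j.
Proof. by rewrite XiE L_sumLt. Qed.

Lemma K2 a : a \in A -> Phi u v FM a *m Xi = Xi *m act a.
Proof.
move=> Aa.
have Bb j l : u j *m a *m v l \in B.
  apply/commP; apply: intertwM (vI l); apply: intertwM (uI j) _; exact/commP.
rewrite {1}/Phi {2}XiE !mulmx_suml; apply: eq_bigr => j _.
rewrite -[LHS]mulmxA -[RHS]mulmxA; congr (_ *m _).
rewrite mulmx_suml.
under eq_bigr => l _ do rewrite -mulmxA L'_Xi' /= /actF.
have E l : S *m Phi x y M (u j *m a *m v l) *m T *m (S *m Xj l) =
   S *m (Phi x y M (u j *m a *m v l) *m (T *m S)) *m Xj l by rewrite !mulmxA.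
under eq_bigr => l _ do rewrite E (TS x y M) (PhiE xI yI yx1) // -mulmxA.
by rewrite -mulmx_sumr sumPhiXj // mulmxA.
Qed.

Local Notation S' := (SM u v FM).
Local Notation T' := (TM u v FM).

Definition eta : 'M[k]_(rdim (FoM uI vI vu1 FM), d) := S' *m Xi.
Definition ginv : 'M[k]_(d, rdim (FoM uI vI vu1 FM)) := Yi *m T'.

Lemma B1' : (1%:M : 'M_n1) \in A.
Proof. by mem. Qed.

Lemma eta_hom a : a \in A -> ract (FoM uI vI vu1 FM) a *m eta = eta *m act a.
Proof.
move=> Aa /=; rewrite /actF /eta.
have -> : S' *m Phi u v FM a *m T' *m (S' *m Xi) =
  S' *m (Phi u v FM a *m (T' *m S')) *m Xi by rewrite !mulmxA.
rewrite (TS u v FM) (PhiE uI vI vu1) // -[LHS]mulmxA K2 //.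
by rewrite mulmxA.
Qed.

Lemma ginv_eta : ginv *m eta = 1%:M.
Proof.
rewrite /ginv /eta.
have -> : Yi *m T' *m (S' *m Xi) = Yi *m ((T' *m S') *m Xi) by rewrite !mulmxA.
by rewrite (TS u v FM) K2 ?B1' // act1 mulmx1 K4.
Qed.

Lemma eta_ginv : eta *m ginv = 1%:M.
Proof.
rewrite /ginv /eta.
have -> : S' *m Xi *m (Yi *m T') = S' *m (Xi *m Yi) *m T' by rewrite !mulmxA.
by rewrite K3 -/(EM u v FM) (SE uI vI vu1) (ST uI vI vu1).
Qed.

Lemma ginv_hom a : a \in A -> act a *m ginv = ginv *m ract (FoM uI vI vu1 FM) a.
Proof.
move=> Aa.
have -> : act a *m ginv = ginv *m (eta *m act a) *m ginv.
  by rewrite [ginv *m (eta *m _)]mulmxA ginv_eta mul1mx.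
by rewrite -eta_hom // [ginv *m (_ *m eta)]mulmxA -mulmxA eta_ginv mulmx1.
Qed.

End M.
Lemma DmXj (M N : rmod A) (f : 'M_(rdim M, rdim N)) j : is_hom f ->
  Dm r f *m Xj N j = Xj M j *m f.
Proof.
move=> Hf; rewrite /Xj mulmx_sumr mulmx_suml; apply: eq_bigr => i _.
rewrite mulmxA Dm_Lt -!mulmxA Hf //; by mem.
Qed.

Lemma hom_Fh (M N : rmod A) (f : 'M_(rdim M, rdim N)) : is_hom f ->
  is_hom (Fh xI yI yx1 f).
Proof. by case: (Fun_functor xI yI yx1) => H1 _ _ _; apply: (H1 M N f). Qed.

Lemma K5 (M N : rmod A) (f : 'M_(rdim M, rdim N)) : is_hom f ->
  @Dm k I n2 T2 s (FoM xI yI yx1 M) (FoM xI yI yx1 N) (Fh xI yI yx1 f) *m Xi N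
  = Xi M *m f.
Proof.
move=> Hf; rewrite XiE mulmx_sumr [in RHS]XiE mulmx_suml; apply: eq_bigr => j _.
rewrite [LHS]mulmxA Dm_Lt -[LHS]mulmxA -[RHS]mulmxA; congr (_ *m _) => /=.
rewrite /Fh.
have -> : SM x y M *m Dm r f *m TM x y N *m (SM x y N *m Xj N j) =
  SM x y M *m (Dm r f *m (TM x y N *m SM x y N)) *m Xj N j by rewrite !mulmxA.
rewrite (TS x y N) /EM -(Dm_Phi xI yI) //; last by apply/commP; apply: intertw1.
rewrite -/(EM x y M) mulmxA (SE xI yI yx1) -[LHS]mulmxA DmXj //.
by rewrite mulmxA.
Qed.

Lemma eta_nat (M N : rmod A) (f : 'M_(rdim M, rdim N)) : is_hom f ->
  Fh uI vI vu1 (Fh xI yI yx1 f) *m eta N = eta M *m f.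
Proof.
move=> Hf; rewrite /eta.
have Hh : is_hom (Fh xI yI yx1 f) by apply: hom_Fh.
have -> : Fh uI vI vu1 (Fh xI yI yx1 f) *m (SM u v (FoM xI yI yx1 N) *m Xi N) =
  SM u v (FoM xI yI yx1 M) *m (@Dm k I n2 T2 s (FoM xI yI yx1 M) (FoM xI yI yx1 N)
     (Fh xI yI yx1 f) *m (TM u v (FoM xI yI yx1 N) *m
    SM u v (FoM xI yI yx1 N))) *m Xi N by rewrite [Fh uI vI vu1 _]/Fh !mulmxA.
rewrite (TS u v) /EM -(Dm_Phi uI vI) //; last by apply/commP; apply: intertw1.
rewrite -/(EM u v _) mulmxA (SE uI vI vu1) -[LHS]mulmxA K5 //.
by rewrite mulmxA.
Qed.

Lemma iso_FG : iso_id (Fun xI yI yx1) (Fun uI vI vu1).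
Proof.
exists (fun M => eta M); split.
- move=> M; split; first by move=> a Aa; apply: eta_hom.
  exists (ginv M); split.
  + by move=> a Aa; apply: ginv_hom.
  + exact: eta_ginv.
  + exact: ginv_eta.
- by move=> M N f Hf; apply: eta_nat.
Qed.

End Iso.

Local Close Scope ring_scope.

Section NatLemmas.
Variables (c t : nat).
Hypotheses (t1 : 0 < t) (tc : t <= c.+1).

Definition hv (b : nat) : nat := b + (c.+1 - t <= b) + (c + t <= b).
Definition gv (a : nat) : nat := a - (c.+1 - t < a) - (c.+1 + t < a).

Lemma hv_lt a b : (hv a < hv b) = (a < b).
Proof. rewrite /hv; case: (leqP (c.+1 - t) a); case: (leqP (c+t) a);
  case: (leqP (c.+1 - t) b); case: (leqP (c+t) b); lia. Qed.

Lemma hv_inj a b : (hv a == hv b) = (a == b).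
Proof. rewrite /hv; case: (leqP (c.+1 - t) a); case: (leqP (c+t) a);
  case: (leqP (c.+1 - t) b); case: (leqP (c+t) b); lia. Qed.

Lemma hv_center b : (hv b == c.+1) = (b == c).
Proof. rewrite /hv; case: (leqP (c.+1 - t) b); case: (leqP (c+t) b); lia. Qed.

Lemma hv_pos b : (c.+1 < hv b) = (c < b).
Proof. rewrite /hv; case: (leqP (c.+1 - t) b); case: (leqP (c+t) b); lia. Qed.

Lemma hv_neg b : b <= c.*2 -> hv (c.*2 - b) = c.*2.+2 - hv b.
Proof. move=> hb; rewrite /hv; case: (leqP (c.+1 - t) b); case: (leqP (c+t) b);
  case: (leqP (c.+1 - t) (c.*2 - b)); case: (leqP (c+t) (c.*2 - b)); lia. Qed.

Lemma hvK a : a != c.+1 - t -> a != c.+1 + t -> hv (gv a) = a.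
Proof. rewrite /hv /gv; case: (ltnP (c.+1 - t) a); case: (ltnP (c.+1 + t) a);
  move=> *; case: (leqP (c.+1 - t) _); case: (leqP (c + t) _); lia. Qed.

Lemma gv_lt a : a < c.*2.+3 -> a != c.+1 - t -> a != c.+1 + t -> gv a < c.*2.+1.
Proof. rewrite /gv; case: (ltnP (c.+1 - t) a); case: (ltnP (c.+1 + t) a); lia. Qed.
End NatLemmas.

Local Open Scope ring_scope.

Section Comb.
Variables (k : fieldType) (Q q : k) (d c t : nat).
Hypotheses (t1 : (0 < t)%N) (tc : (t <= c.+1)%N).
Local Notation N := (c.*2.+1).
Local Notation N2 := ((c.+1).*2.+1).

Lemma hO_lt (b : 'I_N) : (hv c t b < N2)%N.
Proof. have := ltn_ord b; rewrite /hv; lia. Qed.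
Definition hO (b : 'I_N) : 'I_N2 := Ordinal (hO_lt b).

Lemma hO_inj a b : (hO a == hO b) = (a == b).
Proof. by rewrite -val_eqE /= hv_inj. Qed.

Lemma hO_lt2 (a b : 'I_N) : (val (hO a) < val (hO b))%N = (val a < val b)%N.
Proof. by rewrite /= hv_lt. Qed.

Lemma hO_center (a : 'I_N) : (2 * hO a == N2.-1)%N = (2 * a == N.-1)%N.
Proof.
have := hv_center t1 tc a; rewrite /=.
by case: eqP; case: eqP => // ? ? ?; lia.
Qed.

Lemma hO_pos (a : 'I_N) : (N2.-1 < 2 * hO a)%N = (N.-1 < 2 * a)%N.
Proof.
have := hv_pos t1 tc a; rewrite /=.
by case: ltnP; case: ltnP => // ? ? ?; lia.
Qed.

Lemma hO_neg (a b : 'I_N) : (val (hO b) == N2.-1 - hO a)%N = (val b == N.-1 - a)%N.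
Proof.
have ha := ltn_ord a; have hb := ltn_ord b.
have haa : (val a <= c.*2)%N by move: ha; rewrite ltnS.
change ((hv c t b == c.*2.+2 - hv c t a) = (val b == c.*2 - a))%N.
by rewrite -(hv_inj t1 tc (val b) (c.*2 - a)) (hv_neg t1 tc haa).
Qed.
Lemma coefK_hO a b : Defs.coefK Q (hO a) (hO b) = Defs.coefK Q a b.
Proof. by rewrite /Defs.coefK hO_center hO_pos hO_neg hO_inj. Qed.

Definition Hw (w : tens N d) : tens N2 d := [ffun j => hO (w j)].

Lemma Hw_inj w w' : (Hw w == Hw w') = (w == w').
Proof.
apply/eqP/eqP => [E|-> //]; apply/ffunP => j.
by have := congr1 (fun f : tens N2 d => f j) E; rewrite /Hw !ffunE => /eqP; rewrite hO_inj => /eqP.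
Qed.

Lemma actT_Hw (i : 'I_d) w w' : actT Q q i (Hw w) (Hw w') = actT Q q i w w'.
Proof.
rewrite /actT; case: ifP => _.
  rewrite /Hw !ffunE coefK_hO; congr (_%:R * _).
  have E j : ([ffun j0 => hO (w' j0)] j == [ffun j0 => hO (w j0)] j) = (w' j == w j) by rewrite !ffunE hO_inj.
  by under eq_forallb => j do rewrite E.
set sw := [ffun j => if j == prev_ord i then w i else if j == i then w (prev_ord i) else w j].
have -> : [ffun j => if j == prev_ord i then Hw w i
      else if j == i then Hw w (prev_ord i) else Hw w j] = Hw sw.
  by apply/ffunP => j; rewrite /Hw /sw !ffunE; case: ifP => //; case: ifP.
by rewrite !Hw_inj /Hw !ffunE hO_inj hO_lt2.
Qed.

End Comb.

Section Supp.
Variables (k : fieldType) (Q q : k) (d c : nat).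
Local Notation N := (c.*2.+1).

Definition absv (a : 'I_N) : nat := if (c <= a)%N then (a - c)%N else (c - a)%N.
Definition used (w : tens N d) (t : nat) := [exists j, absv (w j) == t].

Lemma coefK_supp (a b : 'I_N) : Defs.coefK Q a b != 0 -> (b == a) || (val b == N.-1 - a)%N.
Proof.
apply: contraR; case/norP => /negbTE H1 /negbTE H2.
by rewrite /Defs.coefK H1 H2 !mul0r addr0; case: ifP => _; rewrite ?eqxx //; case: ifP => _; rewrite eqxx.
Qed.

Lemma absv_neg (a b : 'I_N) : (val b == N.-1 - a)%N -> absv b = absv a.
Proof. have := ltn_ord a; have := ltn_ord b; rewrite /absv => ? ? /eqP ->.
  case: (leqP c a); case: (leqP c (N.-1 - a)); lia. Qed.

Lemma actT_supp (i : 'I_d) (w w' : tens N d) : actT Q q i w w' != 0 ->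
  exists s : 'I_d -> 'I_d, forall j, absv (w' j) = absv (w (s j)) /\ absv (w j) = absv (w' (s j)).
Proof.
rewrite /actT; case: ifP => i0.
  case: (boolP [forall j, _]) => [/forallP H|]; last by rewrite mul0r eqxx.
  rewrite mul1r => /coefK_supp Hc; exists id => j.
  case: (eqVneq j i) => [->|nji]; last by have := H j; rewrite nji /= => /eqP ->.
  by case/orP: Hc => [/eqP -> //| /absv_neg ->].
set sw := [ffun j => _] => Hnz.
have Hsw : (w' == w) || (w' == sw).
  apply: contraR Hnz; case/norP => /negbTE H1 /negbTE H2; rewrite H1 H2 /=.
  by rewrite !mul0r addr0; case: ifP => _; rewrite ?eqxx //; case: ifP => _; rewrite eqxx.
case/orP: Hsw => /eqP ->; first by exists id.
exists (fun j => if j == prev_ord i then i else if j == i then prev_ord i else j) => j.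
rewrite /sw !ffunE.
have ip : (i == prev_ord i) = false.
  apply/negbTE; rewrite -val_eqE /=; move/negbT: i0; change (val i) with (nat_of_ord i); move=> /eqP ?; apply/eqP; lia.
case: (eqVneq j (prev_ord i)) => [->|njp]; first by rewrite ip eqxx.
case: (eqVneq j i) => [->|nji] /=; first by rewrite !eqxx.
by rewrite (negbTE njp) (negbTE nji).
Qed.

Lemma actT_used (i : 'I_d) (w w' : tens N d) t : actT Q q i w w' != 0 ->
  used w t = used w' t.
Proof.
case/actT_supp => s Hs; apply/existsP/existsP => [[j /eqP Hj]|[j /eqP Hj]].
  by exists (s j); case: (Hs j) => _ <-; rewrite Hj.
by exists (s j); case: (Hs j) => <-; rewrite Hj.
Qed.
End Supp.

Lemma sum_collapse (k : fieldType) (T : finType) (F : 'I_#|T| -> k) (w0 : T) :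
  \sum_(r < #|T|) (enum_val r == w0)%:R * F r = F (enum_rank w0).
Proof.
rewrite (bigD1 (enum_rank w0)) //= enum_rankK eqxx mul1r big1 ?addr0 // => r nr.
rewrite (_ : (enum_val r == w0) = false) ?mul0r //; apply/negbTE.
by apply: contra nr => /eqP <-; rewrite enum_valK.
Qed.

Lemma sum_collapse_r (k : fieldType) (T : finType) (F : 'I_#|T| -> k) (w0 : T) :
  \sum_(r < #|T|) F r * (enum_val r == w0)%:R = F (enum_rank w0).
Proof.
rewrite -[RHS](sum_collapse F w0); apply: eq_bigr => r _; exact: mulrC.
Qed.

Section Mats.
Variables (k : fieldType) (Q q : k) (d c t : nat).
Hypotheses (t1 : (0 < t)%N) (tc : (t <= c.+1)%N).
Local Notation N := (c.*2.+1).
Local Notation N2 := ((c.+1).*2.+1).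

Lemma hv_avoid b : ((hv c t b != c.+1 - t) && (hv c t b != c.+1 + t))%N.
Proof. rewrite /hv; case: (leqP (c.+1 - t) b); case: (leqP (c+t) b) => *;
  apply/andP; split; apply/eqP; lia. Qed.

Lemma absv2 (a : 'I_N2) : ((absv (c:=c.+1) a == t) = ((a : nat) == c.+1 - t) || ((a : nat) == c.+1 + t))%N.
Proof.
rewrite /absv; case: (leqP c.+1 a) => *.
  by apply/eqP/orP => [H|[/eqP H|/eqP H]]; [right; apply/eqP|..]; lia.
by apply/eqP/orP => [H|[/eqP H|/eqP H]]; [left; apply/eqP|..]; lia.
Qed.

Local Notation Hw := (@Hw d c t t1 tc).

Lemma used_Hw w : used (Hw w) t = false.
Proof.
apply/existsP => [[j]]; rewrite absv2 /Hw ffunE /=.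
by have /andP[h1 h2] := hv_avoid (w j); rewrite (negbTE h1) (negbTE h2).
Qed.

Definition Gw (u : tens N2 d) : tens N d := [ffun j => inord (gv c t (u j))].

Lemma GwK u : ~~ used u t -> Hw (Gw u) = u.
Proof.
move=> Hu; apply/ffunP => j; apply: val_inj; rewrite /Hw /Gw !ffunE /=.
have : ~~ (absv (c:=c.+1) (u j) == t).
  by apply: contra Hu => H; apply/existsP; exists j.
rewrite absv2 => /norP [h1 h2].
have hl := ltn_ord (u j).
rewrite inordK ?(hvK t1 tc h1 h2) //.
by apply: (gv_lt t1 tc) => //; move: hl; rewrite doubleS.
Qed.

Lemma actT_out (i : 'I_d) (u : tens N2 d) w : used u t ->
  actT Q q i (Hw w) u = 0 /\ actT Q q i u (Hw w) = 0.
Proof.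
move=> Hu; split; apply/eqP; apply: contraTT Hu => H.
  by have := actT_used t H; rewrite used_Hw => <-.
by have := actT_used t H; rewrite used_Hw => ->.
Qed.

Definition Xm : 'M[k]_(tdim N2 d, tdim N d) :=
  \matrix_(r, r') ((enum_val r : tens N2 d) == Hw (enum_val r'))%:R.

Lemma Xm_intertw : intertw (Tmx Q q N2 d) (Tmx Q q N d) Xm.
Proof.
move=> i; apply/matrixP => r r'; rewrite !mxE.
under eq_bigr => r'' _ do rewrite !mxE.
under [RHS]eq_bigr => r'' _ do rewrite !mxE.
rewrite sum_collapse_r enum_rankK.
set u := enum_val r.
case: (boolP (used u t)) => Hu.
  rewrite (proj1 (actT_out i (enum_val r') Hu)) big1 // => r'' _.
  by rewrite (_ : (u == _) = false) ?mul0r //; apply: contraTF Hu => /eqP ->; rewrite used_Hw.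
rewrite -(GwK Hu).
under eq_bigr => r'' _ do rewrite Hw_inj eq_sym.
by rewrite sum_collapse enum_rankK actT_Hw.
Qed.

Lemma XmT_intertw : intertw (Tmx Q q N d) (Tmx Q q N2 d) Xm^T.
Proof.
move=> i; apply/matrixP => r' r; rewrite !mxE.
under eq_bigr => r'' _ do rewrite !mxE.
under [RHS]eq_bigr => r'' _ do rewrite !mxE.
rewrite sum_collapse enum_rankK.
set u := enum_val r.
case: (boolP (used u t)) => Hu.
  rewrite (proj2 (actT_out i (enum_val r') Hu)) big1 // => r'' _.
  by rewrite (_ : (u == _) = false) ?mulr0 //; apply: contraTF Hu => /eqP ->; rewrite used_Hw.
rewrite -(GwK Hu).
under eq_bigr => r'' _ do rewrite Hw_inj eq_sym.
by rewrite sum_collapse_r enum_rankK actT_Hw.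
Qed.

Lemma XtX : Xm^T *m Xm = 1%:M.
Proof.
apply/matrixP => r r'; rewrite !mxE.
under eq_bigr => r'' _ do rewrite !mxE.
rewrite sum_collapse enum_rankK Hw_inj.
by rewrite (inj_eq enum_val_inj).
Qed.

End Mats.

Section Class.
Variables (k : fieldType) (Q q : k) (d c : nat).
Local Notation N := (c.*2.+1).
Local Notation N2 := ((c.+1).*2.+1).

Definition Cl (u : tens N2 d) (t : nat) :=
  ~~ used u t && [forall t' : 'I_t, (0 < t')%N ==> used u t'].

Lemma Cl_actT (i : 'I_d) u u' t : actT Q q i u u' != 0 -> Cl u t = Cl u' t.
Proof.
move=> H; rewrite /Cl (actT_used t H); congr (_ && _).
by apply: eq_forallb => t'; rewrite (actT_used t' H).
Qed.

Definition Pm (t : nat) : 'M[k]_(tdim N2 d) :=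
  \matrix_(r, r') ((r == r') && Cl (enum_val r) t)%:R.

Lemma Pm_intertw t : intertw (Tmx Q q N2 d) (Tmx Q q N2 d) (Pm t).
Proof.
move=> i; apply/matrixP => r r'; rewrite !mxE.
under eq_bigr => r'' _ do rewrite !mxE.
under [RHS]eq_bigr => r'' _ do rewrite !mxE.
rewrite (bigD1 r) //= big1 => [|r'' /negbTE nr]; last by rewrite eq_sym nr mul0r.
rewrite (bigD1 r') //= [X in _ = _ + X]big1 => [|r'' /negbTE nr]; last by rewrite nr mulr0.
rewrite !eqxx /= !addr0.
case: (eqVneq (actT Q q i (enum_val r') (enum_val r)) 0) => [->|H].
  by rewrite !mulr0 mul0r.
by rewrite (Cl_actT t H) mulrC.
Qed.

Lemma PmPm t : Pm t *m Pm t = Pm t.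
Proof.
apply/matrixP => r r'; rewrite !mxE.
under eq_bigr => r'' _ do rewrite !mxE.
rewrite (bigD1 r) //= big1 => [|r'' /negbTE nr]; last by rewrite eq_sym nr mul0r.
rewrite eqxx addr0 /=.
by case: (Cl _ t); case: (r == r'); rewrite /= ?mulr1 ?mulr0 ?mul0r.
Qed.

Lemma PmXX t (t1 : (0 < t)%N) (tc : (t <= c.+1)%N) :
  Pm t *m @Xm k d c t t1 tc *m (@Xm k d c t t1 tc)^T = Pm t.
Proof.
apply/matrixP => r r'.
have PX r0 : (Pm t *m @Xm k d c t t1 tc) r r0 =
    (Cl (enum_val r) t && (enum_val r == Hw t1 tc (enum_val r0)))%:R.
  rewrite mxE (bigD1 r) //= big1 => [|r'' /negbTE nr]; last by rewrite /Pm !mxE eq_sym nr mul0r.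
  by rewrite /Pm /Xm !mxE eqxx addr0 /=; case: (Cl _ t); rewrite /= ?mul1r ?mul0r.
rewrite mxE; under eq_bigr => r'' _ do rewrite PX !mxE.
rewrite mxE /=; case: (boolP (Cl (enum_val r) t)) => HC; last first.
  by rewrite andbF big1 // => r'' _; rewrite mul0r.
have Hu : ~~ used (enum_val r) t by case/andP: HC.
under eq_bigr => r'' _ do rewrite -{1}(GwK t1 tc Hu) Hw_inj eq_sym /=.
rewrite sum_collapse enum_rankK (GwK t1 tc Hu) andbT.
by rewrite (inj_eq enum_val_inj) eq_sym.
Qed.

Lemma Cl_uniq u t1 t2 : (0 < t1)%N -> (0 < t2)%N -> Cl u t1 -> Cl u t2 -> t1 = t2.
Proof.
wlog lt12 : t1 t2 / (t1 < t2)%N.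
  move=> W p1 p2 H1 H2; case: (ltngtP t1 t2) => [lt|lt|//].
    exact: W.
  by apply/esym; apply: W.
move=> p1 _ /andP[u1 _] /andP[_ /forallP H2].
have := H2 (Ordinal lt12); rewrite /= p1 /= => Hu.
by rewrite Hu in u1.
Qed.

Lemma Cl_exists u : (d <= c)%N -> exists tau : 'I_c.+1, Cl u tau.+1.
Proof.
move=> dc.
have ex : exists n, (n < c.+1)%N && ~~ used u n.+1.
  case: (boolP [exists n : 'I_(c.+1), ~~ used u n.+1]) => [/existsP [n Hn]|Hall].
    by exists n; rewrite ltn_ord Hn.
  exfalso.
  have Hu (n : 'I_c.+1) : used u n.+1.
    by apply: contraR Hall => H; apply/existsP; exists n.
  pose F (j : 'I_d) : 'I_c.+1 := inord (absv (u j)).-1.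
  have sub : [pred n : 'I_c.+1 | true] \subset image F [pred j : 'I_d | true].
    apply/subsetP => n _; have /existsP [j /eqP Hj] := Hu n.
    apply/imageP; exists j => //; apply: val_inj; rewrite /F Hj /= inordK //.
  have := subset_leq_card sub; rewrite cardT size_enum_ord => H.
  have := leq_trans H (leq_image_card _ _); rewrite cardT size_enum_ord.
  lia.
case: (ex_minnP ex) => m /andP[mc Hm] Hmin.
exists (Ordinal mc); rewrite /Cl /= Hm /=; apply/forallP => t'; apply/implyP => pt'.
apply: contraT => Hn.
have ht' := ltn_ord t'.
have := Hmin t'.-1; rewrite prednK // Hn andbT => /(_ _).
move=> H; have h2 : (t' <= c.+1)%N by lia.
have := H h2; lia.
Qed.

Lemma sumCl u : (d <= c)%N -> \sum_(tau < c.+1) (Cl u tau.+1)%:R = 1 :> k.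
Proof.
move=> dc; have [t0 H0] := Cl_exists u dc.
rewrite (bigD1 t0) //= H0 big1 ?addr0 // => tau nt.
case: (boolP (Cl u tau.+1)) => // H.
have E := Cl_uniq (ltn0Sn _) (ltn0Sn _) H H0.
by case/eqP: nt; apply: val_inj; case: E.
Qed.

Lemma sumPm : (d <= c)%N -> \sum_(tau < c.+1) Pm tau.+1 = 1%:M.
Proof.
move=> dc; apply/matrixP => r r'; rewrite summxE !mxE.
under eq_bigr => tau _ do rewrite mxE.
case: eqP => [->|_] /=; first by rewrite sumCl.
by rewrite big1.
Qed.

End Class.

Local Close Scope ring_scope.
Local Open Scope ring_scope.

Section Summand.
Variables (k : fieldType) (I : finType).

Definition summand n1 n2 (T1 : I -> 'M[k]_n1) (T2 : I -> 'M[k]_n2) : Prop :=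
  exists (J : finType) (x : J -> 'M[k]_(n1, n2)) (y : J -> 'M[k]_(n2, n1)),
    [/\ forall j, intertw T1 T2 (x j), forall j, intertw T2 T1 (y j) &
        \sum_j y j *m x j = 1%:M].

Lemma summand_refl n (T : I -> 'M[k]_n) : summand T T.
Proof.
exists unit, (fun _ => 1%:M), (fun _ => 1%:M); split => [j|j|]; try exact: intertw1.
by rewrite (big_pred1 tt) ?mulmx1 // => -[].
Qed.

Lemma summand_trans n1 n2 n3 (T1 : I -> 'M[k]_n1) (T2 : I -> 'M[k]_n2)
  (T3 : I -> 'M[k]_n3) : summand T1 T2 -> summand T2 T3 -> summand T1 T3.
Proof.
move=> [J1 [x1 [y1 [xI1 yI1 s1]]]] [J2 [x2 [y2 [xI2 yI2 s2]]]].
exists (J1 * J2)%type, (fun p => x1 p.1 *m x2 p.2), (fun p => y2 p.2 *m y1 p.1).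
split => [p|p|]; first by apply: intertwM.
  by apply: intertwM.
rewrite -(pair_big xpredT xpredT (fun a b => y2 b *m y1 a *m (x1 a *m x2 b))) /=.
rewrite exchange_big /= -[RHS]s2; apply: eq_bigr => j2 _.
under eq_bigr => j1 _ do rewrite !mulmxA -(mulmxA (y2 j2)).
by rewrite -mulmx_suml -mulmx_sumr s1 mulmx1.
Qed.

Lemma sum_enum_val (J : finType) n m (F : J -> 'M[k]_(n, m)) :
  \sum_(i < #|J|) F (enum_val i) = \sum_j F j.
Proof. by rewrite -big_enum_val. Qed.

Lemma morita_summand n1 n2 (T1 : I -> 'M[k]_n1) (T2 : I -> 'M[k]_n2) :
  summand T1 T2 -> summand T2 T1 -> morita (comm T1) (comm T2).
Proof.
move=> [J1 [x1 [y1 [xI1 yI1 s1]]]] [J2 [x2 [y2 [xI2 yI2 s2]]]].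
have xI : forall i : 'I_#|J1|, intertw T1 T2 (x1 (enum_val i)) by move=> i; apply: xI1.
have yI : forall i : 'I_#|J1|, intertw T2 T1 (y1 (enum_val i)) by move=> i; apply: yI1.
have uI : forall i : 'I_#|J2|, intertw T2 T1 (x2 (enum_val i)) by move=> i; apply: xI2.
have vI : forall i : 'I_#|J2|, intertw T1 T2 (y2 (enum_val i)) by move=> i; apply: yI2.
have yx1 : \sum_(i < #|J1|) y1 (enum_val i) *m x1 (enum_val i) = 1%:M.
  by rewrite -s1; apply: (sum_enum_val (fun j => y1 j *m x1 j)).
have vu1 : \sum_(i < #|J2|) y2 (enum_val i) *m x2 (enum_val i) = 1%:M.
  by rewrite -s2; apply: (sum_enum_val (fun j => y2 j *m x2 j)).
exists (Fun xI yI yx1), (Fun uI vI vu1); split.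
- exact: Fun_functor.
- exact: Fun_functor.
- exact: iso_FG.
- exact: iso_FG.
Qed.
End Summand.

Local Close Scope ring_scope.
Local Open Scope ring_scope.

Section Steps.
Variables (k : fieldType) (Q q : k) (d : nat).

Lemma step_up c : summand (Tmx Q q (c.+1).*2.+1 d) (Tmx Q q c.*2.+1 d).
Proof.
have t1 : (0 < 1)%N by [].
have tc : (1 <= c.+1)%N by [].
exists unit, (fun _ => @Xm k d c 1 t1 tc), (fun _ => (@Xm k d c 1 t1 tc)^T).
split => [j|j|].
- exact: Xm_intertw.
- exact: XmT_intertw.
- by rewrite (big_pred1 tt) // XtX.
Qed.

Lemma step_down c : (d <= c)%N -> summand (Tmx Q q c.*2.+1 d) (Tmx Q q (c.+1).*2.+1 d).
Proof.
move=> dc.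
pose X (tau : 'I_c.+1) := @Xm k d c tau.+1 (ltn0Sn _) (ltn_ord tau).
exists 'I_c.+1, (fun tau : 'I_c.+1 => (X tau)^T *m Pm k d c tau.+1), (fun tau : 'I_c.+1 => Pm k d c tau.+1 *m X tau).
split => [j|j|].
- by apply: intertwM; [apply: XmT_intertw | apply: Pm_intertw].
- by apply: intertwM; [apply: Pm_intertw | apply: Xm_intertw].
- rewrite -(sumPm k dc); apply: eq_bigr => tau _.
  by rewrite mulmxA PmXX PmPm.
Qed.

Lemma summand_odd c1 c2 : (d <= c1)%N -> (d <= c2)%N ->
  summand (Tmx Q q c1.*2.+1 d) (Tmx Q q c2.*2.+1 d).
Proof.
move=> h1 h2; case: (leqP c1 c2) => [le|lt].
  rewrite -(subnKC le); elim: (c2 - c1)%N => [|n IH]; first by rewrite addn0; apply: summand_refl.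
  rewrite addnS; apply: summand_trans IH _; apply: step_down; lia.
rewrite -(subnKC (ltnW lt)); elim: (c1 - c2)%N => [|n IH]; first by rewrite addn0; apply: summand_refl.
rewrite addnS; apply: summand_trans _ IH; apply: step_up.
Qed.
End Steps.

Unset Implicit Arguments.
Theorem corollary3p11 (k : fieldType) (Q q : k) (d m n : nat) :
  Q != 0 -> q != 0 -> (1 <= d)%N ->
  odd m -> odd n -> (2 * d <= m)%N -> (2 * d <= n)%N ->
  morita (schurB Q q m d) (schurB Q q n d).
Proof.
move=> _ _ _ om on hm hn.
have Em : m = (m./2).*2.+1 by rewrite -{1}(odd_double_half m) om.
have En : n = (n./2).*2.+1 by rewrite -{1}(odd_double_half n) on.
have h1 : (d <= m./2)%N by move: hm; rewrite {1}Em; lia.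
have h2 : (d <= n./2)%N by move: hn; rewrite {1}En; lia.
rewrite Em En.
apply: morita_summand; apply: summand_odd => //.
Qed.
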